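(* Let $w\in\mathbb{R}^n$ be a strictly positive vector and $\mu>0$, and define $f_i^*=\min\{1,\mu/w_i\}$ for $i\in[n]$. Then for any matrix $A\in\mathbb{R}^{n\times n}$, $$\sup_{f\in\mathbb{R}^n:\ \|f\|_{w,1}\le\mu,\ \|f\|_1\le1}\left\{f^\top Af\right\}\le4\sup_{i,j\in[n]}\left\{f_i^*|A_{ij}|f_j^*\right\}.$$
   Context: $\|f\|_{w,1}=\sum_i w_i|f_i|$ denotes the weighted $\ell_1$-norm and $\|f\|_1=\sum_i|f_i|$. *)

(* Defs.v *)
From mathcomp Require Import all_boot all_order all_algebra.
Set Implicit Arguments. Unset Strict Implicit. Unset Printing Implicit Defensive.
Import Order.TTheory GRing.Theory Num.Theory.
Local Open Scope ring_scope.

Definition wl1 (R : realFieldType) n (w f : 'I_n -> R) : R := \sum_(i < n) w i * `|f i|.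
Definition l1 (R : realFieldType) n (f : 'I_n -> R) : R := \sum_(i < n) `|f i|.
Definition qform (R : realFieldType) n (A : 'M[R]_n) (f : 'I_n -> R) : R :=
  \sum_(i < n) \sum_(j < n) f i * A i j * f j.
Definition fstar (R : realFieldType) n (w : 'I_n -> R) (mu : R) (i : 'I_n) : R :=
  Num.min 1 (mu / w i).

(* Main.v *)
Require Import Defs.
From mathcomp Require Import all_boot all_order all_algebra.
From mathcomp Require Import ring lra.
Import Order.TTheory GRing.Theory Num.Theory.
Local Open Scope ring_scope.

Theorem lemma4 (R : realFieldType) (n : nat) (w : 'I_n -> R) (mu : R)
  (hw : forall i, 0 < w i) (hmu : 0 < mu) (A : 'M[R]_n) (f : 'I_n -> R) :
  wl1 w f <= mu -> l1 f <= 1 ->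
  qform A f <= 4 * \big[Num.max/0]_(i < n) \big[Num.max/0]_(j < n)
                     (fstar w mu i * `|A i j| * fstar w mu j).
Proof.
move=> hwl hl1.
set M := \big[Num.max/0]_(i < n) _.
have fpos : forall i, 0 < fstar w mu i.
  by move=> i; rewrite /fstar lt_min ltr01 divr_gt0.
have M0 : 0 <= M.
  rewrite /M; elim/big_ind: _ => //; first by move=> x y hx hy; rewrite le_max hx.
  move=> i _; elim/big_ind: _ => //; first by move=> x y hx hy; rewrite le_max hx.
  by move=> j _; rewrite mulr_ge0 ?mulr_ge0 ?normr_ge0 // ltW.
have Mge : forall i j, fstar w mu i * `|A i j| * fstar w mu j <= M.
  move=> i j; apply: le_trans (le_bigmax _ _ i).
  exact: (le_bigmax _ (fun j => fstar w mu i * `|A i j| * fstar w mu j) j).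
pose g i := `|f i| / fstar w mu i.
have g0 : forall i, 0 <= g i by move=> i; rewrite divr_ge0 ?normr_ge0 // ltW.
have gle : forall i, g i <= `|f i| + w i * `|f i| / mu.
  move=> i; rewrite /g ler_pdivrMr //.
  have := fpos i; have := hw i; have := normr_ge0 (f i).
  rewrite /fstar; case: (leP 1 (mu / w i)) => h.
  - by move=> a b _; rewrite mulr1 lerDl divr_ge0 ?mulr_ge0 // ltW.
  - move=> a b _.
    have -> : (`|f i| + w i * `|f i| / mu) * (mu / w i) = mu / w i * `|f i| + `|f i|.
      by field; rewrite !gt_eqF.
    by rewrite lerDr mulr_ge0 // divr_ge0 // ltW.
have sg : \sum_i g i <= 2.
  apply: le_trans (ler_sum _ (fun i _ => gle i)) _.
  rewrite big_split /= -!/(l1 f) -mulr_suml -/(wl1 w f).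
  have : wl1 w f / mu <= 1 by rewrite ler_pdivrMr // mul1r.
  move: hl1; lra.
have step : qform A f <= \sum_(i < n) \sum_(j < n) g i * M * g j.
  apply: ler_sum => i _; apply: ler_sum => j _.
  apply: le_trans (ler_norm _) _.
  have -> : `|f i * A i j * f j| = g i * (fstar w mu i * `|A i j| * fstar w mu j) * g j.
    rewrite /g !normrM.
    have h1 := fpos i; have h2 := fpos j.
    field; rewrite ?gt_eqF //.
  apply: ler_wpM2r => //; apply: ler_wpM2l => //.
apply: le_trans step _.
have -> : \sum_(i < n) \sum_(j < n) g i * M * g j = M * ((\sum_i g i) * (\sum_i g i)).
  rewrite mulr_suml mulr_sumr; apply: eq_bigr => i _.
  rewrite mulr_sumr mulr_sumr; apply: eq_bigr => j _; ring.
have sg0 : 0 <= \sum_i g i by apply: sumr_ge0 => i _.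
rewrite mulrC; apply: ler_wpM2r => //.
by have := ler_pM sg0 sg0 sg sg; lra.
Qed.
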